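(* Let $p\ge1$, $0\le q<2p$, $D_p>0$, $K_q>0$, and suppose that for $0<\epsilon\le\epsilon_0$ and all $B>0$ \[ \Delta_{\mathrm{MSE}}(\epsilon,B)=D_p\epsilon^{2p}-\frac{K_q\epsilon^q}{B}+R_p(\epsilon,B),\qquad |R_p(\epsilon,B)|\le L_b\epsilon^{2p+\delta_b}+L_v\frac{\epsilon^{q+\delta_v}}{B}, \] with $L_b,L_v,\delta_b,\delta_v>0$. Let $C=(K_q/D_p)^{1/(2p-q)}$, $r=1/(2p-q)$, $f_{p,q}(x)=D_px^{2p}-K_qx^q$, fix $0<\rho<1$, set $x_-=(1-\rho)C$, $x_+=(1+\rho)C$, and \[ \mathfrak m_\rho=\min\{K_qx_-^q-D_px_-^{2p},\;D_px_+^{2p}-K_qx_+^q\}>0. \] If \[ B\ge B_0(\rho):=\max\left\{\left(\frac{4L_bx_+^{2p+\delta_b}}{\mathfrak m_\rho}\right)^{1/(r\delta_b)},\left(\frac{4L_vx_+^{q+\delta_v}}{\mathfrak m_\rho}\right)^{1/(r\delta_v)},\left(\frac{x_+}{\epsilon_0}\right)^{1/r}\right\}, \] then $\Delta_{\mathrm{MSE}}(x_-B^{-r},B)<0$ and $\Delta_{\mathrm{MSE}}(x_+B^{-r},B)>0$; consequently at least one sign-changing crossing $\epsilon^*_{\mathrm{loc}}(B)$ of $\Delta_{\mathrm{MSE}}(\cdot,B)$ lies in \[ (1-\rho)CB^{-r}\le\epsilon^*_{\mathrm{loc}}(B)\le(1+\rho)CB^{-r}. \] If in addition $f_{p,q}'>0$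 on $[x_-,x_+]$ and the $x$-derivative of the rescaled remainder $\eta_B(x)=B^{2pr}R_p(xB^{-r},B)$ is bounded in absolute value on $[x_-,x_+]$ by less than half of $\min_{[x_-,x_+]}f'_{p,q}$, then the crossing in this bracket is unique.
   Context: $\Delta_{\mathrm{MSE}}(\epsilon,B)$ is the mean-squared-error difference (unmitigated minus zero-noise-extrapolated) at noise strength $\epsilon$ and total shot budget $B$. *)

(* Defs.v *)
From Stdlib Require Import Reals.
From Coquelicot Require Import Coquelicot.
Open Scope R_scope.

Definition r_exp (p q : R) : R := 1 / (2 * p - q).

Definition C_const (p q Dp Kq : R) : R := Rpower (Kq / Dp) (1 / (2 * p - q)).

Definition fpq (p q Dp Kq : R) (x : R) : R := Dp * Rpower x (2 * p) - Kq * Rpower x q.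

Definition x_minus (p q Dp Kq rho : R) : R := (1 - rho) * C_const p q Dp Kq.
Definition x_plus (p q Dp Kq rho : R) : R := (1 + rho) * C_const p q Dp Kq.

Definition m_rho (p q Dp Kq rho : R) : R :=
  let xm := x_minus p q Dp Kq rho in
  let xp := x_plus p q Dp Kq rho in
  Rmin (Kq * Rpower xm q - Dp * Rpower xm (2 * p))
       (Dp * Rpower xp (2 * p) - Kq * Rpower xp q).

Definition B0 (p q Dp Kq eps0 Lb Lv db dv rho : R) : R :=
  let xp := x_plus p q Dp Kq rho in
  let m := m_rho p q Dp Kq rho in
  let r := r_exp p q in
  Rmax (Rmax (Rpower (4 * Lb * Rpower xp (2 * p + db) / m) (1 / (r * db)))
             (Rpower (4 * Lv * Rpower xp (q + dv) / m) (1 / (r * dv))))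
       (Rpower (xp / eps0) (1 / r)).

Definition eta_B (p q : R) (Rp : R -> R -> R) (B : R) (x : R) : R :=
  Rpower B (2 * p * r_exp p q) * Rp (x * Rpower B (- r_exp p q)) B.

(* Main.v *)
Require Import Defs.
From Stdlib Require Import Reals Lra.
From Coquelicot Require Import Coquelicot.
Open Scope R_scope.

Lemma rp_pos x a : 0 < Rpower x a.
Proof. unfold Rpower. apply exp_pos. Qed.

Lemma rp_mul x y a : 0 < x -> 0 < y -> Rpower (x * y) a = Rpower x a * Rpower y a.
Proof. intros. rewrite Rpower_mult_distr; auto. Qed.

Lemma rp_inv y a : 0 < y -> Rpower (/ y) a = / Rpower y a.
Proof. intros. unfold Rpower. rewrite ln_Rinv; auto. rewrite <- exp_Ropp. f_equal. ring. Qed.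

Lemma rp_one a : Rpower 1 a = 1.
Proof. unfold Rpower. rewrite ln_1, Rmult_0_r. apply exp_0. Qed.

Lemma rp_inv_exp Y k : 0 < Y -> k <> 0 -> Rpower (Rpower Y (1 / k)) k = Y.
Proof. intros. rewrite Rpower_mult. replace (1 / k * k) with 1 by (field; auto).
  apply Rpower_1; auto. Qed.

Lemma rp_le_from Y k B : 0 < Y -> 0 < k -> Rpower Y (1 / k) <= B -> Y <= Rpower B k.
Proof. intros HY Hk H. rewrite <- (rp_inv_exp Y k HY) by lra.
  apply Rle_Rpower_l; [lra|]. split; [apply rp_pos| exact H]. Qed.

Lemma fkey p q Dp Kq c : 0 < Dp -> 0 < Kq -> q < 2 * p -> 0 < c ->
  Dp * Rpower (c * C_const p q Dp Kq) (2 * p) - Kq * Rpower (c * C_const p q Dp Kq) q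
  = Kq * Rpower (c * C_const p q Dp Kq) q * (Rpower c (2 * p - q) - 1).
Proof.
  intros hD hK hq hc.
  replace (2 * p) with (q + (2 * p - q)) at 1 by ring.
  rewrite Rpower_plus. rewrite (rp_mul c _ (2 * p - q)) by (auto; apply rp_pos).
  unfold C_const. rewrite rp_inv_exp by (try apply Rdiv_lt_0_compat; auto; lra).
  field. lra.
Qed.

Lemma div_bound a m P Bd : 0 < P -> 0 < Bd -> 0 < m -> 4 * a / m <= Bd -> a / (P * Bd) <= m / 4 / P.
Proof.
  intros HP HB Hm H.
  assert (a <= m * Bd / 4).
  { apply Rmult_le_compat_r with (r := m / 4) in H; [|lra].
    replace (4 * a / m * (m / 4)) with a in H by (field; lra). lra. }
  replace (a / (P * Bd)) with (a * / Bd * / P) by (field; lra).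
  replace (m / 4 / P) with ((m * Bd / 4) * / Bd * / P) by (field; lra).
  apply Rmult_le_compat_r; [left; apply Rinv_0_lt_compat; auto|].
  apply Rmult_le_compat_r; [left; apply Rinv_0_lt_compat; auto|]. lra.
Qed.

Theorem proposition7
  (p q Dp Kq eps0 Lb Lv db dv rho : R) (Delta Rp : R -> R -> R)
  (hp : 1 <= p) (hq0 : 0 <= q) (hq : q < 2 * p)
  (hD : 0 < Dp) (hK : 0 < Kq) (heps0 : 0 < eps0)
  (hLb : 0 < Lb) (hLv : 0 < Lv) (hdb : 0 < db) (hdv : 0 < dv)
  (hdec : forall e B, 0 < e <= eps0 -> 0 < B ->
     Delta e B = Dp * Rpower e (2 * p) - Kq * Rpower e q / B + Rp e B)
  (hbound : forall e B, 0 < e <= eps0 -> 0 < B ->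
     Rabs (Rp e B) <= Lb * Rpower e (2 * p + db) + Lv * Rpower e (q + dv) / B)
  (hcont : forall e B, 0 < e -> 0 < B -> continuous (fun t => Delta t B) e)
  (hrho : 0 < rho < 1) :
  let r := r_exp p q in
  let xm := x_minus p q Dp Kq rho in
  let xp := x_plus p q Dp Kq rho in
  0 < m_rho p q Dp Kq rho /\
  forall B, B0 p q Dp Kq eps0 Lb Lv db dv rho <= B ->
    Delta (xm * Rpower B (- r)) B < 0 /\
    Delta (xp * Rpower B (- r)) B > 0 /\
    (exists es, xm * Rpower B (- r) <= es <= xp * Rpower B (- r) /\ Delta es B = 0) /\
    ((forall x, xm <= x <= xp -> 0 < Derive (fpq p q Dp Kq) x) ->
     (forall x, xm <= x <= xp -> ex_derive (eta_B p q Rp B) x) ->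
     (exists M, (forall x, xm <= x <= xp -> Rabs (Derive (eta_B p q Rp B) x) <= M) /\
                (forall y, xm <= y <= xp -> M < Derive (fpq p q Dp Kq) y / 2)) ->
     exists! es, xm * Rpower B (- r) <= es <= xp * Rpower B (- r) /\ Delta es B = 0).
Proof.
  intros r xm xp.
  set (s := 2 * p - q).
  assert (Hs : 0 < s) by (unfold s; lra).
  assert (Hr : r = 1 / s) by reflexivity.
  assert (Hr0 : 0 < r) by (rewrite Hr; apply Rdiv_lt_0_compat; lra).
  set (C := C_const p q Dp Kq).
  assert (HC : 0 < C) by apply rp_pos.
  assert (Hxm : 0 < xm) by (unfold xm, x_minus; fold C; apply Rmult_lt_0_compat; lra).
  assert (Hxp : 0 < xp) by (unfold xp, x_plus; fold C; apply Rmult_lt_0_compat; lra).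
  assert (Hxmp : xm < xp) by (unfold xm, xp, x_minus, x_plus; fold C; nra).
  set (m := m_rho p q Dp Kq rho).
  assert (Hfm : 0 < Kq * Rpower xm q - Dp * Rpower xm (2 * p)).
  { unfold xm, x_minus. pose proof (fkey p q Dp Kq (1 - rho) hD hK hq ltac:(lra)).
    assert (Rpower (1 - rho) (2 * p - q) < 1).
    { pose proof (rp_one (2 * p - q)).
      assert (Rpower (1 - rho) (2 * p - q) < Rpower 1 (2 * p - q)) by (apply Rlt_Rpower_l; lra). lra. }
    assert (0 < Kq * Rpower ((1 - rho) * C_const p q Dp Kq) q) by (apply Rmult_lt_0_compat; [lra|apply rp_pos]).
    nra. }
  assert (Hfp : 0 < Dp * Rpower xp (2 * p) - Kq * Rpower xp q).
  { unfold xp, x_plus. pose proof (fkey p q Dp Kq (1 + rho) hD hK hq ltac:(lra)).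
    assert (1 < Rpower (1 + rho) (2 * p - q)).
    { pose proof (rp_one (2 * p - q)).
      assert (Rpower 1 (2 * p - q) < Rpower (1 + rho) (2 * p - q)) by (apply Rlt_Rpower_l; lra). lra. }
    assert (0 < Kq * Rpower ((1 + rho) * C_const p q Dp Kq) q) by (apply Rmult_lt_0_compat; [lra|apply rp_pos]).
    nra. }
  assert (Hm : 0 < m) by (apply Rmin_glb_lt; auto).
  split; [exact Hm|].
  intros B HB.
  unfold B0 in HB. cbv zeta in HB. fold xp m r in HB.
  assert (HBpos : 0 < B).
  { eapply Rlt_le_trans; [apply rp_pos|]. eapply Rle_trans; [apply Rmax_r|exact HB]. }
  set (b := Rpower B r).
  assert (Hb : 0 < b) by apply rp_pos.
  assert (Hb1 : xp / eps0 <= b).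
  { apply rp_le_from; auto. apply Rdiv_lt_0_compat; auto.
    eapply Rle_trans; [apply Rmax_r|exact HB]. }
  assert (Hb1' : xp <= eps0 * b).
  { apply Rmult_le_compat_l with (r := eps0) in Hb1; [|lra].
    replace (eps0 * (xp / eps0)) with xp in Hb1 by (field; lra). exact Hb1. }
  assert (Hb2 : 4 * Lb * Rpower xp (2 * p + db) / m <= Rpower b db).
  { unfold b. rewrite Rpower_mult. apply rp_le_from.
    - apply Rdiv_lt_0_compat; auto. pose proof (rp_pos xp (2 * p + db)). nra.
    - apply Rmult_lt_0_compat; auto.
    - eapply Rle_trans; [|exact HB]. eapply Rle_trans; [|apply Rmax_l]. apply Rmax_l. }
  assert (Hb3 : 4 * Lv * Rpower xp (q + dv) / m <= Rpower b dv).
  { unfold b. rewrite Rpower_mult. apply rp_le_from.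
    - apply Rdiv_lt_0_compat; auto. pose proof (rp_pos xp (q + dv)). nra.
    - apply Rmult_lt_0_compat; auto.
    - eapply Rle_trans; [|exact HB]. eapply Rle_trans; [|apply Rmax_l]. apply Rmax_r. }
  set (P := Rpower B (2 * p * r)).
  assert (HP : 0 < P) by apply rp_pos.
  assert (HbP : Rpower b (2 * p) = P).
  { unfold b, P. rewrite Rpower_mult. f_equal. ring. }
  assert (HbqB : Rpower b q = P / B).
  { unfold b, P. rewrite Rpower_mult.
    apply Rmult_eq_reg_r with B; [|lra].
    replace (Rpower B (2 * p * r) / B * B) with (Rpower B (2 * p * r)) by (field; lra).
    transitivity (Rpower B (r * q) * Rpower B 1); [rewrite Rpower_1; auto|].
    rewrite <- Rpower_plus. f_equal. rewrite Hr. unfold s. field. lra. }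
  assert (Hinv : Rpower B (- r) = / b) by (unfold b; apply Rpower_Ropp).
  assert (Hpow : forall x a, 0 < x -> Rpower (x * / b) a = Rpower x a * / Rpower b a).
  { intros x a Hx. rewrite rp_mul; auto. rewrite rp_inv; auto. apply Rinv_0_lt_compat; auto. }
  assert (Hex : forall x, 0 < x <= xp -> 0 < x * / b <= eps0).
  { intros x Hx. split.
    - apply Rmult_lt_0_compat; [lra|]. apply Rinv_0_lt_compat; auto.
    - apply Rmult_le_reg_r with b; auto. replace (x * / b * b) with x by (field; lra). lra. }
  assert (Hdelta : forall x, 0 < x <= xp ->
            Delta (x * / b) B = fpq p q Dp Kq x / P + Rp (x * / b) B).
  { intros x Hx. rewrite hdec; auto. rewrite !Hpow by lra. unfold fpq.
    rewrite HbP, HbqB. field. split; lra. }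
  assert (Hrem : forall x, 0 < x <= xp -> Rabs (Rp (x * / b) B) <= m / 2 / P).
  { intros x Hx. eapply Rle_trans; [apply hbound; auto|]. rewrite !Hpow by lra.
    rewrite !Rpower_plus. rewrite HbP, HbqB.
    pose proof (rp_pos b db). pose proof (rp_pos b dv).
    assert (X1 : Rpower x (2 * p) * Rpower x db <= Rpower xp (2 * p + db)).
    { rewrite <- Rpower_plus. apply Rle_Rpower_l; lra. }
    assert (X2 : Rpower x q * Rpower x dv <= Rpower xp (q + dv)).
    { rewrite <- Rpower_plus. apply Rle_Rpower_l; lra. }
    replace (Lb * (Rpower x (2 * p) * Rpower x db * / (P * Rpower b db)))
      with ((Lb * (Rpower x (2 * p) * Rpower x db)) / (P * Rpower b db)) by (field; lra).
    replace (Lv * (Rpower x q * Rpower x dv * / (P / B * Rpower b dv)) / B)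
      with ((Lv * (Rpower x q * Rpower x dv)) / (P * Rpower b dv)) by (field; lra).
    assert (T1 : Lb * (Rpower x (2 * p) * Rpower x db) / (P * Rpower b db) <= m / 4 / P).
    { eapply Rle_trans; [|apply (div_bound (Lb * Rpower xp (2 * p + db)) m P (Rpower b db)); auto].
      - unfold Rdiv. apply Rmult_le_compat_r.
        + left. apply Rinv_0_lt_compat. apply Rmult_lt_0_compat; auto.
        + apply Rmult_le_compat_l; lra.
      - rewrite <- Rmult_assoc. exact Hb2. }
    assert (T2 : Lv * (Rpower x q * Rpower x dv) / (P * Rpower b dv) <= m / 4 / P).
    { eapply Rle_trans; [|apply (div_bound (Lv * Rpower xp (q + dv)) m P (Rpower b dv)); auto].
      - unfold Rdiv. apply Rmult_le_compat_r.
        + left. apply Rinv_0_lt_compat. apply Rmult_lt_0_compat; auto.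
        + apply Rmult_le_compat_l; lra.
      - rewrite <- Rmult_assoc. exact Hb3. }
    replace (m / 2 / P) with (m / 4 / P + m / 4 / P) by (field; lra). lra. }
  assert (HmP : 0 < m / P) by (apply Rdiv_lt_0_compat; auto).
  assert (Hneg : Delta (xm * / b) B < 0).
  { rewrite Hdelta by lra.
    assert (fpq p q Dp Kq xm <= - m).
    { unfold fpq. assert (m <= Kq * Rpower xm q - Dp * Rpower xm (2 * p)) by apply Rmin_l. lra. }
    assert (fpq p q Dp Kq xm / P <= - m / P).
    { unfold Rdiv. apply Rmult_le_compat_r; [left; apply Rinv_0_lt_compat; auto| auto]. }
    pose proof (Hrem xm ltac:(lra)). pose proof (Rle_abs (Rp (xm * / b) B)).
    replace (m / 2 / P) with (m / P / 2) in * by (field; lra).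
    replace (- m / P) with (- (m / P)) in * by (field; lra). lra. }
  assert (Hpos : Delta (xp * / b) B > 0).
  { rewrite Hdelta by lra.
    assert (m <= fpq p q Dp Kq xp).
    { unfold fpq. apply Rmin_r. }
    assert (m / P <= fpq p q Dp Kq xp / P).
    { unfold Rdiv. apply Rmult_le_compat_r; [left; apply Rinv_0_lt_compat; auto| auto]. }
    pose proof (Hrem xp ltac:(lra)). pose proof (Rabs_maj2 (Rp (xp * / b) B)).
    replace (m / 2 / P) with (m / P / 2) in * by (field; lra). lra. }
  assert (Hlt : xm * / b < xp * / b).
  { apply Rmult_lt_compat_r; auto. apply Rinv_0_lt_compat; auto. }
  assert (Hexist : exists es, xm * / b <= es <= xp * / b /\ Delta es B = 0).
  { destruct (Ranalysis5.IVT_interv (fun t => Delta t B) (xm * / b) (xp * / b)) as [z Hz]; auto.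
    - intros a Ha. apply continuity_pt_filterlim. apply hcont; auto.
      assert (0 < xm * / b) by (apply Rmult_lt_0_compat; auto; apply Rinv_0_lt_compat; auto). lra.
    - exists z. exact Hz. }
  rewrite Hinv.
  split; [exact Hneg|]. split; [exact Hpos|]. split; [exact Hexist|].
  intros Hf' Heta [M [HM1 HM2]].
  set (g := fun x => fpq p q Dp Kq x + eta_B p q Rp B x).
  assert (Heta_eq : forall x, eta_B p q Rp B x = P * Rp (x * / b) B).
  { intros x. unfold eta_B. change (r_exp p q) with r. fold P. rewrite Hinv. reflexivity. }
  assert (Hg : forall x, xm <= x <= xp -> Delta (x * / b) B = g x / P).
  { intros x Hx. rewrite Hdelta by lra. unfold g. rewrite Heta_eq. field. lra. }
  assert (Hfd : forall x, 0 < x -> ex_derive (fpq p q Dp Kq) x).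
  { intros x Hx. unfold fpq, Rpower. auto_derive. auto. }
  assert (Hgd : forall x, xm <= x <= xp -> ex_derive g x).
  { intros x Hx. unfold g. apply (ex_derive_plus (fpq p q Dp Kq) (eta_B p q Rp B)); [apply Hfd; lra| apply Heta; auto]. }
  assert (Hgpos : forall x, xm <= x <= xp -> 0 < Derive g x).
  { intros x Hx. unfold g. rewrite Derive_plus; [|apply Hfd; lra| apply Heta; auto].
    pose proof (Rabs_maj2 (Derive (eta_B p q Rp B) x)).
    pose proof (HM1 x Hx). pose proof (HM2 x Hx). pose proof (Hf' x Hx). lra. }
  assert (Hmono : forall x1 x2, xm <= x1 -> x1 < x2 -> x2 <= xp -> g x1 < g x2).
  { intros x1 x2 H1 H2 H3.
    destruct (MVT_cor2 g (Derive g) x1 x2 H2) as [c [Hc1 Hc2]].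
    - intros c Hc. apply is_derive_Reals. apply Derive_correct. apply Hgd. lra.
    - pose proof (Hgpos c ltac:(lra)).
      assert (0 < Derive g c * (x2 - x1)) by (apply Rmult_lt_0_compat; lra). lra. }
  assert (Hzero : forall e, xm * / b <= e <= xp * / b -> Delta e B = 0 ->
             xm <= e * b <= xp /\ g (e * b) = 0).
  { intros e He HD.
    assert (xm <= e * b <= xp).
    { destruct He as [He1 He2]. split.
      - apply Rmult_le_compat_r with (r := b) in He1; [|lra].
        replace (xm * / b * b) with xm in He1 by (field; lra). exact He1.
      - apply Rmult_le_compat_r with (r := b) in He2; [|lra].
        replace (xp * / b * b) with xp in He2 by (field; lra). exact He2. }
    split; auto.
    replace e with (e * b * / b) in HD by (field; lra).
    rewrite Hg in HD by auto.
    apply Rmult_eq_reg_r with (/ P); [|apply Rinv_neq_0_compat; lra].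
    rewrite Rmult_0_l. exact HD. }
  destruct Hexist as [es [Hes1 Hes2]].
  exists es. split; [split; auto|].
  intros e' [He'1 He'2].
  destruct (Hzero es Hes1 Hes2) as [Hx1 Hg1].
  destruct (Hzero e' He'1 He'2) as [Hx2 Hg2].
  assert (es * b = e' * b).
  { destruct (Rtotal_order (es * b) (e' * b)) as [Hl|[Hl|Hl]]; auto.
    - pose proof (Hmono _ _ (proj1 Hx1) Hl (proj2 Hx2)). lra.
    - pose proof (Hmono _ _ (proj1 Hx2) Hl (proj2 Hx1)). lra. }
  apply Rmult_eq_reg_r with b; lra.
Qed.
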